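(* Let $C^\lambda_{\mu\nu}$ be structure constants of an $n$-dimensional Lie algebra over a field $k$ of characteristic zero, $\mathcal C$ the matrix with entries $\mathcal C^\alpha_\beta=C^\alpha_{\beta\gamma}\partial^\gamma$ in $k[[\partial^1,\dots,\partial^n]]$, and $\delta_\rho:=\frac{\partial}{\partial(\partial^\rho)}$. Then for every $N=0,1,2,\dots$ and all indices $\gamma,\mu,\nu$, $$[\delta_\rho(\mathcal C^N)^\gamma_\mu]\,\mathcal C^\rho_\nu-(\delta_\rho\mathcal C^\gamma_\nu)(\mathcal C^N)^\rho_\mu=C^\sigma_{\mu\nu}(\mathcal C^N)^\gamma_\sigma .$$
   Context: Summation over repeated indices is understood. ''Structure constants of a Lie algebra'' means $[\hat x_\mu,\hat x_\nu]=C^\lambda_{\mu\nu}\hat x_\lambda$ for a basis $\hat x_1,\dots,\hat x_n$, so they are antisymmetric in the lower indices and satisfy the Jacobi identity. $\mathcal C^N$ is the $N$-th matrix power ($\mathcal C^0$ the identity matrix), and $\delta_\rho$ is the formal partial derivative with respect to the variable $\partial^\rho$. *)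

(* Defs.v *)
From HB Require Import structures.
From mathcomp Require Import all_boot all_order all_algebra.
From mathcomp Require Import mpoly.
Set Implicit Arguments. Unset Strict Implicit. Unset Printing Implicit Defensive.
Import GRing.Theory.
Local Open Scope ring_scope.

(* Structure constants C l m n  stand for  C^l_{m n}:  [x_m, x_n] = C^l_{m n} x_l. *)
Definition lie_structure_constants (k : fieldType) (n : nat)
    (C : 'I_n -> 'I_n -> 'I_n -> k) : Prop :=
  (forall l m p, C l m p = - C l p m) /\
  (forall m p r l,
     \sum_(s < n) (C s m p * C l s r + C s p r * C l s m + C s r m * C l s p) = 0).

(* The matrix  \mathcal C^a_b = C^a_{b g} d^g  with polynomial entries in the
   variables d^1..d^n (the X_g of {mpoly k[n]}). *)
Definition calC (k : fieldType) (n : nat) (C : 'I_n -> 'I_n -> 'I_n -> k)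
  : 'M[{mpoly k[n]}]_n :=
  \matrix_(a < n, b < n) \sum_(g < n) (C a b g)%:MP * 'X_g.

(* Main.v *)
Require Import Defs.
From HB Require Import structures.
From mathcomp Require Import all_boot all_order all_algebra.
From mathcomp Require Import mpoly.
From mathcomp Require Import ring.
Import GRing.Theory.
Local Open Scope ring_scope.
Lemma mderivX1 (k : fieldType) (n : nat) (r g : 'I_n) :
  mderiv r ('X_g : {mpoly k[n]}) = (g == r)%:R.
Proof.
rewrite mderivX mnm1E; case: eqP => [->|_].
  have -> : (U_(r) - U_(r))%MM = 0%MM by apply/mnmP=> i; rewrite !mnmE subnn.
  by rewrite mpolyX0 scale1r.
by rewrite scale0r.
Qed.

Lemma dcalC (k : fieldType) (n : nat) (C : 'I_n -> 'I_n -> 'I_n -> k) r a b :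
  mderiv r (calC C a b) = (C a b r)%:MP.
Proof.
rewrite mxE linear_sum /= (bigD1 r) //= big1 ?addr0.
  by rewrite mderiv_mulC mderivX1 eqxx mulr1.
by move=> i /negPf hi; rewrite mderiv_mulC mderivX1 hi mulr0.
Qed.
Lemma expand (k : fieldType) (n : nat) (c : 'I_n -> k) (d : 'I_n -> 'I_n -> k) :
  \sum_(a < n) (c a)%:MP * \sum_(q < n) (d a q)%:MP * ('X_q : {mpoly k[n]})
  = \sum_(q < n) (\sum_(a < n) c a * d a q)%:MP * 'X_q.
Proof.
under eq_bigr => a _ do rewrite mulr_sumr.
rewrite exchange_big /=; apply: eq_bigr => q _.
rewrite rmorph_sum big_distrl /=; apply: eq_bigr => a _.
by rewrite mulrA rmorphM.
Qed.

Lemma jac_scalar (k : fieldType) (n : nat) (C : 'I_n -> 'I_n -> 'I_n -> k)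
  (hC : lie_structure_constants C) t m v q :
  \sum_(a < n) C t a v * C a m q + \sum_(r < n) C t m r * C r v q
  = \sum_(s < n) C s m v * C t s q.
Proof.
case: hC => anti jac.
have := jac m v q t; rewrite !big_split /= => H.
have key : forall x y z : k, z + - y + - x = 0 -> x + y = z.
  by move=> x y z h; rewrite -[z]subr0 -h; ring.
apply: key.
have E1 : \sum_(s < n) C s v q * C t s m = - \sum_(r < n) C t m r * C r v q.
  rewrite -sumrN; apply: eq_bigr => s _; rewrite (anti t s m); ring.
have E2 : \sum_(s < n) C s q m * C t s v = - \sum_(a < n) C t a v * C a m q.
  rewrite -sumrN; apply: eq_bigr => s _; rewrite (anti s q m); ring.
by rewrite E1 E2 in H.
Qed.
Lemma mulE (R : comNzRingType) n (A B : 'M[R]_n) i j : (A * B) i j = \sum_(a < n) A i a * B a j.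
Proof. by rewrite -mulmxE mxE. Qed.
Lemma oneE (R : comNzRingType) n i j : (1 : 'M[R]_n) i j = (i == j)%:R.
Proof. by rewrite mxE. Qed.

Lemma jacM (k : fieldType) (n : nat) (C : 'I_n -> 'I_n -> 'I_n -> k)
  (hC : lie_structure_constants C) t m v :
  \sum_(a < n) (C t a v)%:MP * calC C a m + \sum_(r < n) (C t m r)%:MP * calC C r v
  = \sum_(s < n) (C s m v)%:MP * calC C t s.
Proof.
under eq_bigr => a _ do rewrite mxE.
under [in X in _ + X]eq_bigr => a _ do rewrite mxE.
under [in RHS]eq_bigr => a _ do rewrite mxE.
rewrite (@expand _ _ _ (fun a q => C a m q)) (@expand _ _ _ (fun a q => C a v q)) (@expand _ _ _ (fun a q => C t a q)).
rewrite -big_split /=; apply: eq_bigr => q _.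
by rewrite -mulrDl -rmorphD jac_scalar.
Qed.

Theorem lemma2 (k : fieldType) (n : nat) (C : 'I_n -> 'I_n -> 'I_n -> k)
  (char0 : [pchar k] =i pred0)
  (hC : lie_structure_constants C)
  (N : nat) (g m v : 'I_n) :
  \sum_(r < n) mderiv r (((calC C) ^+ N) g m) * (calC C) r v
  - \sum_(r < n) mderiv r ((calC C) g v) * ((calC C) ^+ N) r m
  = \sum_(s < n) (C s m v)%:MP * ((calC C) ^+ N) g s.
Proof.
under [in X in _ - X]eq_bigr => r _ do rewrite dcalC.
set M := calC C.
elim: N m => [|N IH] m.
  rewrite expr0.
  rewrite big1; last first.
    by move=> r _; rewrite oneE; case: eqP => _; rewrite ?mpolyC1 -?mpolyC_nat ?mderivC ?mul0r // -mpolyC_nat mderivC mul0r.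
  rewrite (bigD1 m) //= big1; last by move=> r /negPf hr; rewrite oneE hr mulr0.
  rewrite (bigD1 g) //= big1; last by move=> s /negPf hs; rewrite oneE eq_sym hs mulr0.
  rewrite !oneE !eqxx !mulr1 !addr0 sub0r.
  by case: hC => anti _; rewrite (anti g m v) rmorphN.
set P := M ^+ N.
rewrite exprSr -/P.
have IH' a : \sum_(r < n) mderiv r (P g a) * M r v
   = \sum_(r < n) (C g v r)%:MP * P r a + \sum_(s < n) (C s a v)%:MP * P g s.
  by rewrite -IH addrC subrK.
have T1 : \sum_(r < n) mderiv r ((P * M) g m) * M r v
  = \sum_(a < n) M a m * (\sum_(r < n) mderiv r (P g a) * M r v)
    + \sum_(a < n) P g a * \sum_(r < n) (C a m r)%:MP * M r v.
  under eq_bigr => r _ do rewrite mulE linear_sum /= big_distrl /=.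
  rewrite exchange_big /= -big_split /=; apply: eq_bigr => a _.
  rewrite !mulr_sumr -big_split /=; apply: eq_bigr => r _.
  by rewrite mderivM dcalC; ring.
have T2 : \sum_(r < n) (C g v r)%:MP * (P * M) r m
  = \sum_(a < n) M a m * \sum_(r < n) (C g v r)%:MP * P r a.
  under eq_bigr => r _ do rewrite mulE mulr_sumr.
  rewrite exchange_big /=; apply: eq_bigr => a _; rewrite mulr_sumr.
  by apply: eq_bigr => r _; ring.
have T3 : \sum_(s < n) (C s m v)%:MP * (P * M) g s
  = \sum_(t < n) P g t * \sum_(s < n) (C s m v)%:MP * M t s.
  under eq_bigr => r _ do rewrite mulE mulr_sumr.
  rewrite exchange_big /=; apply: eq_bigr => a _; rewrite mulr_sumr.
  by apply: eq_bigr => r _; ring.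
have T4 : \sum_(a < n) M a m * \sum_(s < n) (C s a v)%:MP * P g s
  = \sum_(t < n) P g t * \sum_(a < n) (C t a v)%:MP * M a m.
  under eq_bigr => r _ do rewrite mulr_sumr.
  rewrite exchange_big /=; apply: eq_bigr => a _; rewrite mulr_sumr.
  by apply: eq_bigr => r _; ring.
rewrite T1 T2 T3.
under eq_bigr => a _ do rewrite IH' mulrDr.
rewrite big_split /= T4.
under [in RHS]eq_bigr => t _ do rewrite -(@jacM _ _ _ hC) mulrDr.
rewrite [in RHS]big_split /=.
ring.
Qed.
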